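(* Let $f_1,\dots,f_T:\mathbb{R}^d\to\mathbb{R}$ be convex differentiable with $\|\nabla f_t(x)\|\le G$ for all $x$ and $t$, and let $f=\sum_{t=1}^Tf_t$. Let $g:\mathbb{R}^d\to\mathbb{R}$ be convex and differentiable, let $\gamma\ge0$, and assume there is a point $x$ with $g(x)<-\gamma$ and that $\min_{x:\,g(x)+\gamma=0}\|\nabla g(x)\|\ge\sigma>0$. Let $x_*$ and $x_\gamma$ be minimizers of $f$ over $\{g(x)\le0\}$ and over $\{g(x)\le-\gamma\}$, respectively (assumed to exist). Then $$|f(x_* )-f(x_\gamma)|\le\frac{G}{\sigma}\gamma T.$$
   Context: All norms are Euclidean. *)

(* Defs.v *)
From Stdlib Require Import Reals.
From mathcomp Require Import all_boot.

Set Implicit Arguments.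
Unset Strict Implicit.

Local Open Scope R_scope.

Definition vec (d : nat) := 'I_d -> R.

Definition vadd d (x y : vec d) : vec d := fun i => x i + y i.
Definition vscale d (a : R) (x : vec d) : vec d := fun i => a * x i.

Definition dot d (x y : vec d) : R := \big[Rplus/0]_(i < d) (x i * y i).
Definition vnorm d (x : vec d) : R := sqrt (dot x x).

Definition convex_fun d (f : vec d -> R) : Prop :=
  forall (x y : vec d) (l : R), 0 <= l <= 1 ->
    f (vadd (vscale l x) (vscale (1 - l) y)) <= l * f x + (1 - l) * f y.

Definition has_gradient d (f : vec d -> R) (x gr : vec d) : Prop :=
  forall eps : R, 0 < eps -> exists delta : R, 0 < delta /\
    forall h : vec d, vnorm h < delta ->
      Rabs (f (vadd x h) - f x - dot gr h) <= eps * vnorm h.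

Definition is_gradient d (f : vec d -> R) (grad : vec d -> vec d) : Prop :=
  forall x, has_gradient f x (grad x).

(* f = sum_{t=1}^T f_t, with the f_t indexed by 0, ..., T-1. *)
Definition sum_fun d (T : nat) (ft : nat -> vec d -> R) : vec d -> R :=
  fun x => \big[Rplus/0]_(t < T) ft (nat_of_ord t) x.

(* Main.v *)
Require Import Defs.
From Stdlib Require Import Reals Lra FunctionalExtensionality.
From mathcomp Require Import all_boot.
Local Open Scope R_scope.

Lemma big_add n (F G : 'I_n -> R) :
  \big[Rplus/0]_(i < n) (F i + G i) = \big[Rplus/0]_(i < n) F i + \big[Rplus/0]_(i < n) G i.
Proof.
apply: (big_rec3 (fun x y z => x = y + z)); first by lra.
move=> i y1 y2 y3 _ ->; lra.
Qed.

Lemma big_scale n c (F : 'I_n -> R) :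
  \big[Rplus/0]_(i < n) (c * F i) = c * \big[Rplus/0]_(i < n) F i.
Proof.
apply: (big_rec2 (fun x y => x = c * y)); first by lra.
move=> i y1 y2 _ ->; lra.
Qed.

Lemma iter_plus n c : iter n (Rplus c) 0 = INR n * c.
Proof. elim: n => [|n IH]; first by simpl; lra. rewrite S_INR /= IH; lra. Qed.

Lemma big_cst n c : \big[Rplus/0]_(i < n) c = INR n * c.
Proof. by rewrite big_const_ord iter_plus. Qed.

Lemma big_le n (F G : 'I_n -> R) :
  (forall i, F i <= G i) -> \big[Rplus/0]_(i < n) F i <= \big[Rplus/0]_(i < n) G i.
Proof.
move=> H; apply: (big_rec2 (fun x y => x <= y)); first by lra.
move=> i y1 y2 _ Hy; have := H i; lra.
Qed.

Lemma dot_add_r {d} (x y z : vec d) : dot x (vadd y z) = dot x y + dot x z.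
Proof. rewrite /dot -big_add; apply eq_bigr => i _; rewrite /vadd; ring. Qed.

Lemma dot_scale_r {d} (x y : vec d) c : dot x (vscale c y) = c * dot x y.
Proof. rewrite /dot -big_scale; apply eq_bigr => i _; rewrite /vscale; ring. Qed.

Lemma dot_comm {d} (x y : vec d) : dot x y = dot y x.
Proof. rewrite /dot; apply eq_bigr => i _; ring. Qed.

Lemma dot_ge0 {d} (x : vec d) : 0 <= dot x x.
Proof.
rewrite /dot; apply Rle_trans with (\big[Rplus/0]_(i < d) 0).
  rewrite big_cst; lra.
apply big_le => i; nra.
Qed.

Lemma vnorm_ge0 {d} (x : vec d) : 0 <= vnorm x.
Proof. apply sqrt_pos. Qed.

Lemma vnorm_sq {d} (x : vec d) : vnorm x * vnorm x = dot x x.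
Proof. apply sqrt_sqrt, dot_ge0. Qed.

Lemma vnorm_scale {d} (x : vec d) c : 0 <= c -> vnorm (vscale c x) = c * vnorm x.
Proof.
move=> Hc; rewrite /vnorm dot_scale_r dot_comm dot_scale_r -Rmult_assoc.
rewrite sqrt_mult; [|nra|apply dot_ge0]. by rewrite sqrt_square.
Qed.

Lemma cs_sq {d} (x y : vec d) : dot x y * dot x y <= dot x x * dot y y.
Proof.
have Hq : forall t, 0 <= dot x x + 2 * t * dot x y + t * t * dot y y.
  move=> t; have := dot_ge0 (vadd x (vscale t y)).
  rewrite !dot_add_r (dot_comm (vadd _ _) x) (dot_comm (vadd _ _) (vscale t y)) !dot_add_r
    !dot_scale_r (dot_comm (vscale _ _) _) dot_scale_r (dot_comm (vscale _ _) _) dot_scale_r; nra.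
have HA := dot_ge0 x; have HC := dot_ge0 y.
set A := dot x x in Hq HA *; set B := dot x y in Hq *; set C := dot y y in Hq HC *.
case: (Rle_lt_or_eq_dec 0 C HC) => HC'.
  have := Hq (- B / C).
  have -> : A + 2 * (- B / C) * B + (- B / C) * (- B / C) * C = (A * C - B * B) / C by field; lra.
  move=> H; have : 0 <= (A * C - B * B) / C * C by nra.
  have -> : (A * C - B * B) / C * C = A * C - B * B by field; lra.
  lra.
case: (Req_dec B 0) => HB; first by rewrite HB -HC'; lra.
have := Hq (- (A + 1) / (2 * B)).
rewrite -HC'.
have -> : A + 2 * (- (A + 1) / (2 * B)) * B + - (A + 1) / (2 * B) * (- (A + 1) / (2 * B)) * 0 = -1 by field.
lra.
Qed.

Lemma cs {d} (x y : vec d) : - dot x y <= vnorm x * vnorm y.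
Proof.
have H := cs_sq x y.
rewrite /vnorm -sqrt_mult; try apply dot_ge0.
apply Rle_trans with (Rabs (dot x y)); first by rewrite -Rabs_Ropp; apply RRle_abs.
rewrite -sqrt_Rsqr_abs; apply sqrt_le_1_alt; rewrite /Rsqr; lra.
Qed.

Lemma abs_inv a b : Rabs a <= b -> - b <= a <= b.
Proof. move=> H; have := Rle_abs a; have := Rle_abs (- a); rewrite Rabs_Ropp; lra. Qed.

Lemma le_eps a b : (forall eps, 0 < eps -> a <= b + eps) -> a <= b.
Proof.
move=> H; case: (Rle_or_lt a b) => // Hab.
have := H ((a - b) / 2) ltac:(lra); lra.
Qed.

Lemma dir_est {d} (f : vec d -> R) x gr h eps :
  has_gradient f x gr -> 0 < eps -> exists tau, 0 < tau /\
  forall u, 0 < u < tau ->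
    Rabs (f (vadd x (vscale u h)) - f x - u * dot gr h) <= eps * u.
Proof.
move=> Hg He.
have HN : 0 < vnorm h + 1 by have := vnorm_ge0 h; lra.
have [delta [Hd Hdel]] := Hg (eps / (vnorm h + 1)) (Rdiv_lt_0_compat _ _ He HN).
exists (delta / (vnorm h + 1)); split; first by apply Rdiv_lt_0_compat.
move=> u [Hu0 Hu1].
have Hnh := vnorm_ge0 h.
have Hun : vnorm (vscale u h) = u * vnorm h by apply vnorm_scale; lra.
have Hlt : vnorm (vscale u h) < delta.
  rewrite Hun.
  have : u * (vnorm h + 1) < delta.
    have := Rmult_lt_compat_r (vnorm h + 1) _ _ HN Hu1.
    have -> : delta / (vnorm h + 1) * (vnorm h + 1) = delta by field; lra.
    done.
  nra.
have := Hdel _ Hlt; rewrite dot_scale_r Hun => H.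
apply: Rle_trans H _.
have -> : eps / (vnorm h + 1) * (u * vnorm h) = eps * u * (vnorm h / (vnorm h + 1)) by field; lra.
have : vnorm h / (vnorm h + 1) <= 1.
  apply (Rmult_le_reg_r (vnorm h + 1)) => //.
  have -> : vnorm h / (vnorm h + 1) * (vnorm h + 1) = vnorm h by field; lra.
  lra.
have : 0 <= eps * u by nra.
nra.
Qed.

Lemma grad_ineq {d} (f : vec d -> R) x y gr :
  convex_fun f -> has_gradient f x gr ->
  dot gr (vadd y (vscale (-1) x)) <= f y - f x.
Proof.
move=> Hc Hg; apply le_eps => eps He.
set w := vadd y (vscale (-1) x).
have [tau [Ht Hest]] := dir_est f x gr w eps Hg He.
set u := Rmin (tau / 2) 1.
have Hu0 : 0 < u by apply Rmin_glb_lt; lra.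
have Hu1 : u <= 1 by apply Rmin_r.
have Hut : u < tau by have := Rmin_l (tau / 2) 1; rewrite -/u; lra.
have Hv : vadd x (vscale u w) = vadd (vscale u y) (vscale (1 - u) x).
  apply functional_extensionality => i; rewrite /w /vadd /vscale; ring.
have := Hc y x u ltac:(lra); rewrite -Hv => Hcv.
have := Hest u (conj Hu0 Hut) => Ha.
have Hb := abs_inv _ _ Ha.
have : u * dot gr w <= u * (f y - f x + eps) by nra.
move=> H; apply (Rmult_le_reg_l u) => //.
Qed.

Lemma tau_all (P : nat -> R -> Prop) n :
  (forall i, (i < n)%nat -> exists tau, 0 < tau /\ forall u, 0 < u < tau -> P i u) ->
  exists tau, 0 < tau /\ forall u, 0 < u < tau -> forall i, (i < n)%nat -> P i u.
Proof.
elim: n => [|n IH] H.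
  by exists 1; split; [lra | move=> u _ i].
have [t1 [Ht1 H1]] := IH (fun i Hi => H i (leqW Hi)).
have [t2 [Ht2 H2]] := H n (ltnSn n).
exists (Rmin t1 t2); split; first by apply Rmin_glb_lt.
move=> u [Hu0 Hu] i; rewrite ltnS leq_eqVlt => /orP [/eqP -> | Hi].
  apply H2; split => //; have := Rmin_r t1 t2; lra.
apply H1 => //; split => //; have := Rmin_l t1 t2; lra.
Qed.

Definition Bsum {d} T (gradft : nat -> vec d -> vec d) xg (h : vec d) :=
  \big[Rplus/0]_(i < T) dot (gradft (nat_of_ord i) xg) h.

Theorem mainTheorem10
  (d T : nat) (ft : nat -> vec d -> R) (gradft : nat -> vec d -> vec d) (G : R)
  (g : vec d -> R) (gradg : vec d -> vec d) (gamma sigma : R)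
  (xstar xgamma : vec d) :
  (forall t, (t < T)%nat -> convex_fun (ft t)) ->
  (forall t, (t < T)%nat -> is_gradient (ft t) (gradft t)) ->
  (forall t x, (t < T)%nat -> vnorm (gradft t x) <= G) ->
  convex_fun g ->
  is_gradient g gradg ->
  0 <= gamma ->
  (exists x0 : vec d, g x0 < - gamma) ->
  0 < sigma ->
  (forall x, g x + gamma = 0 -> sigma <= vnorm (gradg x)) ->
  g xstar <= 0 ->
  (forall y, g y <= 0 -> sum_fun T ft xstar <= sum_fun T ft y) ->
  g xgamma <= - gamma ->
  (forall y, g y <= - gamma -> sum_fun T ft xgamma <= sum_fun T ft y) ->
  Rabs (sum_fun T ft xstar - sum_fun T ft xgamma) <= G / sigma * gamma * INR T.
Proof.
move=> HC HGr HGb Hgc Hgg Hgam Hx0 Hsig Hlev Hgs Hstar Hgx Hgamma.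
have HK : 0 <= G * INR T.
  destruct T as [|T']; first by simpl; lra.
  have := HGb 0%nat xstar (ltn0Sn T'); have := vnorm_ge0 (gradft 0%nat xstar);
  have := pos_INR T'.+1; nra.
have Hfle : sum_fun T ft xstar <= sum_fun T ft xgamma by apply Hstar; lra.
rewrite Rabs_left1; last by lra.
set a := gradg xgamma.
set w := vadd xstar (vscale (-1) xgamma).
have HBw : Bsum T gradft xgamma w <= sum_fun T ft xstar - sum_fun T ft xgamma.
  rewrite /sum_fun /Bsum.
  have -> : \big[Rplus/0]_(t < T) ft t xstar - \big[Rplus/0]_(t < T) ft t xgamma
    = \big[Rplus/0]_(t < T) (ft t xstar + (-1) * ft t xgamma) by rewrite big_add big_scale; ring.
  apply big_le => i.
  have := grad_ineq (ft i) xgamma xstar (gradft i xgamma) (HC i (ltn_ord i)) (HGr i (ltn_ord i) xgamma).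
  rewrite -/w; lra.
have Haw : dot a w <= g xstar - g xgamma := grad_ineq g xgamma xstar a Hgc (Hgg xgamma).
have Hdesc : forall h, Bsum T gradft xgamma h < 0 ->
    (g xgamma < - gamma \/ dot a h < 0) -> False.
  move=> h HB Hc.
  set c0 := - gamma - g xgamma.
  have Hc0 : 0 <= c0 by rewrite /c0; lra.
  set Bh := Bsum T gradft xgamma h in HB.
  set e1 := - Bh / (2 * (INR T + 1)).
  have HT := pos_INR T.
  have He1 : 0 < e1 by apply Rdiv_lt_0_compat; lra.
  have [tf [Htf Hf]] : exists tau, 0 < tau /\ forall u, 0 < u < tau -> forall i, (i < T)%nat ->
      ft i (vadd xgamma (vscale u h)) <= ft i xgamma + u * dot (gradft i xgamma) h + e1 * u.
    apply (tau_all (fun i u => ft i (vadd xgamma (vscale u h)) <=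
      ft i xgamma + u * dot (gradft i xgamma) h + e1 * u)) => i Hi.
    have [tau [Ht H]] := dir_est (ft i) xgamma (gradft i xgamma) h e1 (HGr i Hi xgamma) He1.
    exists tau; split => // u Hu; have := abs_inv _ _ (H u Hu); lra.
  have [e2 [t3 [He2 [Ht3 H3]]]] : exists e2 t3, 0 < e2 /\ 0 < t3 /\
      forall u, 0 < u < t3 -> u * (dot a h + e2) <= c0.
    case: Hc => Hc.
      have HN : 0 < Rabs (dot a h) + 1 by have := Rabs_pos (dot a h); lra.
      exists 1, (c0 / (Rabs (dot a h) + 1)); split; first lra; split.
        apply Rdiv_lt_0_compat => //; rewrite /c0; lra.
      move=> u [Hu0 Hu1]; have Hab := Rle_abs (dot a h).
      have : u * (Rabs (dot a h) + 1) < c0.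
        have := Rmult_lt_compat_r _ _ _ HN Hu1.
        have -> : c0 / (Rabs (dot a h) + 1) * (Rabs (dot a h) + 1) = c0 by field; lra.
        done.
      nra.
    exists (- dot a h / 2), 1; split; first lra; split; first lra.
    move=> u [Hu0 _]; nra.
  have [tg [Htg Hgest]] := dir_est g xgamma a h e2 (Hgg xgamma) He2.
  set m := Rmin (Rmin tf tg) t3.
  have Hm0 : 0 < m by apply Rmin_glb_lt; [apply Rmin_glb_lt|].
  have Hm1 : m <= tf by have := Rmin_l (Rmin tf tg) t3; have := Rmin_l tf tg; rewrite -/m; lra.
  have Hm2 : m <= tg by have := Rmin_l (Rmin tf tg) t3; have := Rmin_r tf tg; rewrite -/m; lra.
  have Hm3 : m <= t3 by have := Rmin_r (Rmin tf tg) t3; rewrite -/m; lra.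
  set u := m / 2.
  have Hu0 : 0 < u by rewrite /u; lra.
  have Hgz : g (vadd xgamma (vscale u h)) <= - gamma.
    have := abs_inv _ _ (Hgest u ltac:(rewrite /u; lra)).
    have := H3 u ltac:(rewrite /u; lra).
    rewrite /c0; nra.
  have := Hgamma _ Hgz.
  have : sum_fun T ft (vadd xgamma (vscale u h)) <=
         sum_fun T ft xgamma + u * Bh + INR T * (e1 * u).
    rewrite /sum_fun /Bh /Bsum -big_scale -big_cst -!big_add.
    apply big_le => i; have := Hf u ltac:(rewrite /u; lra) i (ltn_ord i); lra.
  have Hte : INR T * e1 <= - Bh / 2.
    have -> : - Bh / 2 = (INR T + 1) * e1 by rewrite /e1; field; lra.
    lra.
  nra.
case: (Rle_lt_or_eq_dec _ _ Hgx) => Hgx'.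
  have HBw0 : 0 <= Bsum T gradft xgamma w.
    apply Rnot_lt_le => H; apply (Hdesc w H); left => //.
  have : 0 <= G * INR T * gamma / sigma.
    apply Rmult_le_pos; [apply Rmult_le_pos => // | apply Rlt_le, Rinv_0_lt_compat => //].
  have -> : G / sigma * gamma * INR T = G * INR T * gamma / sigma by field; lra.
  lra.
have Hna : sigma <= vnorm a by apply Hlev; lra.
have Hna0 : 0 < vnorm a by lra.
have Haa : dot a a = vnorm a * vnorm a by rewrite vnorm_sq.
have Haa0 : 0 < dot a a by rewrite Haa; nra.
set K := G * INR T.
have Key : forall e', 0 < e' ->
    sum_fun T ft xgamma - sum_fun T ft xstar <= (gamma + e') * K / sigma.
  move=> e' He'.
  set s := (gamma + e') / dot a a.
  set h := vadd w (vscale (- s) a).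
  have Hah : dot a h = dot a w - (gamma + e').
    rewrite /h dot_add_r dot_scale_r /s; field; lra.
  have HBh : 0 <= Bsum T gradft xgamma h.
    apply Rnot_lt_le => H; apply (Hdesc h H); right; lra.
  have Hsplit : Bsum T gradft xgamma h = Bsum T gradft xgamma w + (- s) * Bsum T gradft xgamma a.
    rewrite /Bsum -big_scale -big_add; apply eq_bigr => i _.
    by rewrite /h dot_add_r dot_scale_r.
  have HBa : - Bsum T gradft xgamma a <= INR T * (G * vnorm a).
    rewrite /Bsum -big_cst.
    have -> : forall r : R, - r = (-1) * r by move=> r; ring.
    rewrite -big_scale; apply big_le => i.
    have := cs (gradft i xgamma) a.
    have := HGb i xgamma (ltn_ord i).
    have := vnorm_ge0 a.
    nra.
  have Hs0 : 0 <= s by apply Rle_mult_inv_pos; lra.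
  have Heq : s * (INR T * (G * vnorm a)) = (gamma + e') * K * / vnorm a.
    rewrite /s Haa /K; field; lra.
  have Hinv : / vnorm a <= / sigma by apply Rinv_le_contravar.
  have HgK : 0 <= (gamma + e') * K by apply Rmult_le_pos; [lra | rewrite /K].
  have : (gamma + e') * K * / vnorm a <= (gamma + e') * K * / sigma
    by apply Rmult_le_compat_l.
  rewrite /Rdiv.
  nra.
apply le_eps => eps He.
have HK1 : 0 < K + 1 by rewrite /K; lra.
have He' : 0 < eps * sigma / (K + 1) by apply Rdiv_lt_0_compat => //; nra.
have := Key _ He'.
have -> : G / sigma * gamma * INR T = gamma * K / sigma by rewrite /K; field; lra.
have -> : (gamma + eps * sigma / (K + 1)) * K / sigma = gamma * K / sigma + eps * (K / (K + 1))
  by field; lra.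
have : K / (K + 1) <= 1.
  apply (Rmult_le_reg_r (K + 1)) => //.
  have -> : K / (K + 1) * (K + 1) = K by field; lra.
  lra.
nra.
Qed.
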